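(* For integers $1\le k\le l$, up to a unit of $\mathbb{Z}[q,q^{-1}]$, $$\frac{g_{l,k}}{g_{l,k-1}}=\prod_{\substack{m\mid l-k+1\\ 1\le m\le k}}\Phi_m .$$
   Context: In $\mathbb{Z}[q,q^{-1}]$ set $\{i\}_q=q^i-1$, $\{i\}_{q,n}=\{i\}_q\cdots\{i-n+1\}_q$ (equal to $1$ for $n=0$), $\{n\}_q!=\{n\}_{q,n}$. For $0\le i\le k\le l$ set $h_{l,k,i}=\{l-i\}_{q,k-i}\{i\}_q!$ and $g_{l,k}=\mathrm{GCD}(h_{l,k,0},\dots,h_{l,k,k})$ (greatest common divisor in the UFD $\mathbb{Z}[q,q^{-1}]$, defined up to units $\pm q^j$). $\Phi_m$ is the $m$th cyclotomic polynomial. *)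

(* Defs.v *)
From HB Require Import structures.
From mathcomp Require Import all_boot all_order all_algebra all_field.
Set Implicit Arguments. Unset Strict Implicit. Unset Printing Implicit Defensive.
Import Order.TTheory GRing.Theory Num.Theory.
Local Open Scope ring_scope.

Definition qbr (i : nat) : {poly int} := 'X^i - 1.
Definition qfall (i n : nat) : {poly int} := \prod_(j < n) qbr (i - j)%N.
Definition qfact (n : nat) : {poly int} := qfall n n.
Definition hlki (l k i : nat) : {poly int} := qfall (l - i)%N (k - i)%N * qfact i.

(* Divisibility in the Laurent ring Z[q,q^-1], for a b in Z[q]:
   a | b in Z[q,q^-1]  iff  q^j b = a s for some j : nat and s in Z[q]. *)
Definition ldvd (a b : {poly int}) : Prop :=
  exists (j : nat) (s : {poly int}), 'X^j * b = a * s.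

(* g is a greatest common divisor in Z[q,q^-1] of f 0, ..., f n.
   (Every element of Z[q,q^-1] is associate to a polynomial, so it suffices
   to range over polynomial representatives.) *)
Definition is_lgcd (g : {poly int}) (f : nat -> {poly int}) (n : nat) : Prop :=
  (forall i, (i <= n)%N -> ldvd g (f i)) /\
  (forall d : {poly int}, (forall i, (i <= n)%N -> ldvd d (f i)) -> ldvd d g).

(* Main.v *)
Require Import Defs.
From HB Require Import structures.
From mathcomp Require Import all_boot all_order all_algebra all_field zify.
From Stdlib Require Import Classical_Prop.

Fixpoint minE (f : nat -> nat) (n : nat) : nat :=
  if n is n'.+1 then minn (minE f n') (f n) else f 0.

Lemma minE_le f n i : i <= n -> minE f n <= f i.
Proof.
elim: n => [|n IH]; first by rewrite leqn0 => /eqP ->.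
rewrite leq_eqVlt ltnS => /orP[/eqP ->|/IH h] /=; first by rewrite geq_minr.
by apply: leq_trans h; rewrite geq_minl.
Qed.

Lemma minE_ge f n x : (forall i, i <= n -> x <= f i) -> x <= minE f n.
Proof.
elim: n => [|n IH] H /=; first exact: H.
by rewrite leq_min IH ?H // => i hi; apply: H; apply: leq_trans hi _.
Qed.

Lemma minE_ext f g n : (forall i, i <= n -> f i = g i) -> minE f n = minE g n.
Proof.
elim: n => [|n IH] H /=; first exact: H.
by rewrite IH ?H // => i hi; apply: H; apply: leq_trans hi _.
Qed.

Lemma minE_addc f c n : minE (fun i => f i + c) n = minE f n + c.
Proof. by elim: n => [|n IH] //=; rewrite IH addn_minl. Qed.

Definition Ecount l k e i := (l - i) %/ e - (l - k) %/ e + i %/ e.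
Definition Mmin l k e := minE (Ecount l k e) k.

Lemma Mmin_big l k e : 0 < e -> k <= l -> l < e -> Mmin l k e = 0.
Proof.
move=> e0 kl le; apply/eqP; rewrite -leqn0.
apply: leq_trans (minE_le _ _ _ (leq0n k)) _.
by rewrite /Ecount div0n addn0 subn0 divn_small.
Qed.

Lemma divsmall e y x : 0 < e -> x < e -> (y * e + x) %/ e = y.
Proof. by move=> e0 xe; rewrite divnMDl // divn_small // addn0. Qed.

Lemma Mmin_step l k e : 0 < e -> k.+1 <= l ->
  Mmin l k.+1 e = Mmin l k e + ((e <= k.+1) && (e %| l - k)).
Proof.
move=> e0 kl.
have Ak : l - k = (l - k.+1).+1 by lia.
set d := (e %| l - k).
have Hs : forall i, i <= k -> Ecount l k.+1 e i = Ecount l k e i + d.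
  move=> i ik; rewrite /Ecount Ak divnS // -Ak.
  have : (l - k) %/ e <= (l - i) %/ e by apply: leq_div2r; lia.
  rewrite Ak divnS // -Ak -/d; lia.
rewrite /Mmin /= (minE_ext _ (fun i => Ecount l k e i + d) k) // minE_addc.
have -> : Ecount l k.+1 e k.+1 = (e %| k.+1) + k %/ e.
  by rewrite /Ecount subnn divnS.
have Mk : minE (Ecount l k e) k <= k %/ e.
  by apply: leq_trans (minE_le _ _ _ (leqnn k)) _; rewrite /Ecount subnn add0n.
set M := minE _ _ in Mk *.
case dE : d; last first.
  rewrite andbF !addn0; apply/minn_idPl; lia.
case: (leqP e k.+1) => ek /=; last first.
  have k0 : k %/ e = 0 by rewrite divn_small // ltnW.
  have -> : (e %| k.+1) = false.
    by apply/negbTE; rewrite /dvdn modn_small.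
  rewrite k0 in Mk *; lia.
case kd : (e %| k.+1).
  apply/minn_idPl; lia.
suff : M < k %/ e by move=> h; apply/minn_idPl; lia.
have ek' : e <= k by rewrite leq_eqVlt ltnS in ek; case/orP: ek => // /eqP h; rewrite h dvdnn in kd.
pose q := k %/ e; pose r := k %% e.
have dk : k = q * e + r := divn_eq k e.
have rlt : r.+1 < e.
  rewrite ltn_neqAle ltn_mod e0 andbT; apply/negP => /eqP h.
  by move: kd; rewrite /dvdn -addn1 -modnDml -/r addn1 h modnn.
have q0 : 0 < q by rewrite divn_gt0.
have [c dc] : exists c, l - k = c * e.
  by exists ((l - k) %/ e); rewrite divnK //; move: dE; rewrite /d.
have Mi := minE_le (Ecount l k e) k (q * e - 1) ltac:(lia).
apply: (leq_ltn_trans Mi).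
rewrite /Ecount dc mulnK //.
have -> : l - (q * e - 1) = c * e + r.+1 by lia.
rewrite divsmall //.
have qe : e <= q * e by rewrite leq_pmull.
have -> : q * e - 1 = (q - 1) * e + (e - 1) by rewrite mulnBl mul1n; lia.
rewrite divsmall; last lia; last done.
rewrite -/q; lia.
Qed.
Lemma cnt_div e a b : (0 < e)%N -> (b <= a)%N ->
  (\sum_(j < b) (e %| a - j))%N = (a %/ e - (a - b) %/ e)%N.
Proof.
move=> e0; elim: b => [|b IH] ba; first by rewrite big_ord0 subn0 subnn.
rewrite big_ord_recr /= IH; last exact: ltnW.
have Hab : (a - b = (a - b.+1).+1)%N by rewrite subnS prednK // subn_gt0.
have le1 : ((a - b) %/ e <= a %/ e)%N by apply: leq_div2r; rewrite leq_subr.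
rewrite Hab divnS // in le1 *.
move: (e %| (a - b.+1).+1)%N ((a - b.+1) %/ e)%N (a %/ e)%N le1 => x y w.
clear IH Hab; case: x => /= h; lia.
Qed.

Import Order.TTheory GRing.Theory Num.Theory.
Local Open Scope ring_scope.

Lemma mup_lt_size (D : {poly algC}) z : D != 0 -> (mup z D < size D)%N.
Proof.
move=> D0; have := leqnn (mup z D); rewrite mup_geq // => /dvdp_leq.
by rewrite size_exp_XsubC; apply.
Qed.

Lemma dvd_algC (D H : {poly algC}) : D != 0 -> H != 0 ->
  (forall z, (mup z D <= mup z H)%N) -> D %| H.
Proof.
move: {2}(size D) (leqnn (size D)) => n; elim: n D H => [|n IH] D H.
  by rewrite leqn0 size_poly_eq0 => /eqP -> /eqP.
move=> Dn D0 H0 Hm.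
case: (boolP (size D == 1)) => [/size_poly1P [c c0 ->]|].
  by rewrite -[c%:P]mulr1 mul_polyC dvdpZl // dvd1p.
move/closed_rootP=> [r rr].
have [D1 eD] := factor_theorem _ _ rr.
have Hr : root H r.
  have := Hm r; rewrite -dvdp_XsubCl in rr.
  rewrite (XsubC_dvd _ D0) in rr.
  move=> h; have : (0 < mup r H)%N by apply: leq_trans h.
  by rewrite -(XsubC_dvd _ H0) dvdp_XsubCl.
have [H1 eH] := factor_theorem _ _ Hr.
have D10 : D1 != 0 by apply: contraNneq D0 => h; rewrite eD h mul0r.
have H10 : H1 != 0 by apply: contraNneq H0 => h; rewrite eH h mul0r.
rewrite eD eH dvdp_mul2r ?polyXsubC_eq0 //.
apply: IH => //.
  have : size D = (size D1).+1 by rewrite eD size_Mmonic ?monicXsubC ?size_XsubC ?addn2.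
  by move=> e; move: Dn; rewrite e.
move=> z; have := Hm z; rewrite eD eH !mupM ?polyXsubC_eq0 //.
by rewrite -[('X - r%:P)]expr1 mup_XsubCX leq_add2r.
Qed.

Definition pC (p : {poly int}) : {poly algC} := map_poly (intr : int -> algC) p.

Lemma pC_eq0 p : (pC p == 0) = (p == 0).
Proof. by rewrite -!size_poly_eq0 size_map_inj_poly //; apply: intr_inj. Qed.

Lemma ldvd_of (d g : {poly int}) : d != 0 -> g != 0 ->
  zcontents d \is a GRing.unit ->
  (forall z : algC, z != 0 -> (mup z (pC d) <= mup z (pC g))%N) -> ldvd d g.
Proof.
move=> d0 g0 cu Hm.
pose J := size d.
have XJ0 : ('X^J : {poly int}) != 0 by rewrite monic_neq0 ?monicXn.
have pd0 : pC d != 0 by rewrite pC_eq0.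
have pg0 : pC g != 0 by rewrite pC_eq0.
have : pC d %| pC ('X^J * g).
  apply: dvd_algC; rewrite ?pC_eq0 ?mulf_neq0 //.
  have X0 : ('X^J : {poly algC}) != 0 by rewrite monic_neq0 ?monicXn.
  move=> z; rewrite /pC rmorphM /= map_polyXn -/(pC g) -/(pC d) (mupM _ X0 pg0).
  have [->|z0] := eqVneq z 0.
    have -> : ('X^J : {poly algC}) = ('X - 0%:P)^+J by rewrite polyC0 subr0.
    rewrite mup_XsubCX eqxx.
    apply: leq_trans (leq_addr _ _).
    have := mup_lt_size _ 0 pd0; rewrite /pC size_map_inj_poly //.
      by move/ltnW.
    exact: intr_inj.
  by apply: leq_trans (Hm z z0) (leq_addl _ _).
have defZtoC: (intr : int -> algC) =1 (ratr : rat -> algC) \o (intr : int -> rat).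
  by move=> a; rewrite /= rmorph_int.
rewrite /pC !(eq_map_poly defZtoC) !map_poly_comp dvdp_map dvdp_rat_int.
move/dvdpP_int => [r Dr].
exists J, ((zcontents d)^-1 *: r).
rewrite Dr -scalerAr scalerAl; congr (_ * _).
by rewrite [X in _ *: X]zpolyEprim scalerA mulVr // scale1r.
Qed.

Lemma mup_prod (I : Type) (r : seq I) (P : pred I) (F : I -> {poly algC}) z :
  (forall i, P i -> F i != 0) ->
  mup z (\prod_(i <- r | P i) F i) = (\sum_(i <- r | P i) mup z (F i))%N.
Proof.
move=> HF.
pose K (p : {poly algC}) (n : nat) := p != 0 /\ mup z p = n.
suff [] : K (\prod_(i <- r | P i) F i) (\sum_(i <- r | P i) mup z (F i))%N by [].
apply: (big_rec2 K).
  by split; rewrite ?oner_eq0 // mupNroot // root1.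
move=> i p n Pi [p0 <-]; split; first by rewrite mulf_neq0 ?HF.
by rewrite mupM ?HF.
Qed.

Lemma mup_exp (p : {poly algC}) n z : p != 0 -> mup z (p ^+ n) = (n * mup z p)%N.
Proof.
move=> p0; elim: n => [|n IH]; first by rewrite expr0 mupNroot // root1.
by rewrite exprS mupM ?expf_neq0 // IH mulSn.
Qed.

Lemma mup_dvd (a b : {poly algC}) z : b != 0 -> a %| b -> (mup z a <= mup z b)%N.
Proof.
move=> b0 ab; have a0 : a != 0 by apply: contraNneq b0 => h; move: ab; rewrite h dvd0p.
by rewrite mup_geq //; apply: dvdp_trans ab; rewrite -mup_geq.
Qed.

Lemma pC_qbr n : pC (qbr n) = 'X^n - 1.
Proof. by rewrite /pC /qbr rmorphB /= map_polyXn rmorph1. Qed.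

Lemma mup_Xn1 (z : algC) n : (0 < n)%N -> mup z ('X^n - 1) = (z ^+ n == 1) :> nat.
Proof.
move=> n0.
have rt : root ('X^n - 1) z = (z ^+ n == 1).
  by rewrite /root !hornerE subr_eq0.
have nz : ('X^n - 1 : {poly algC}) != 0 by rewrite monic_neq0 ?monicXnsubC.
case: (boolP (z ^+ n == 1)) => zn; last by rewrite mupNroot // rt.
apply/eqP; rewrite eqn_leq; apply/andP; split.
  rewrite mup_leq //; apply/negP => h.
  have sep : separable_poly ('X^n - 1 : {poly algC}).
    by apply: separable_Xn_sub_1; rewrite pnatr_eq0 -lt0n.
  by rewrite (separable_nosquare sep) ?size_XsubC in h.
by rewrite -XsubC_dvd // dvdp_XsubCl rt.
Qed.

Lemma mup_Phi (z : algC) m : mup z (pC 'Phi_m) = m.-primitive_root z :> nat.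
Proof.
case: m => [|m].
  rewrite Cyclotomic0 /pC rmorph1 mupNroot ?root1 //.
have [w pw] := C_prim_root_exists (ltn0Sn m).
have nz : pC 'Phi_m.+1 != 0 by rewrite pC_eq0 monic_neq0 ?Cyclotomic_monic.
case: (boolP (m.+1.-primitive_root z)) => pz; last first.
  by rewrite mupNroot // /pC (Cintr_Cyclotomic pw) root_cyclotomic.
apply/eqP; rewrite eqn_leq; apply/andP; split; last first.
  by rewrite -XsubC_dvd // dvdp_XsubCl /pC (Cintr_Cyclotomic pw) root_cyclotomic.
have nzX : ('X^(m.+1) - 1 : {poly algC}) != 0 by rewrite monic_neq0 ?monicXnsubC.
apply: (@leq_trans (mup z ('X^(m.+1) - 1))); last first.
  by rewrite mup_Xn1 // (prim_expr_order pz) eqxx.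
apply: mup_dvd => //.
have := prod_Cyclotomic (ltn0Sn m) => /(congr1 pC).
rewrite -pC_qbr /qbr => <-; rewrite /pC rmorph_prod /=.
rewrite (big_rem m.+1) /=; first by apply: dvdp_mulr.
by rewrite -dvdn_divisors.
Qed.

Lemma qfall_monic a b : (b <= a)%N -> qfall a b \is monic.
Proof.
move=> ba; apply: monic_prod => j _; apply: monic_Xn_sub_1.
by rewrite subn_gt0; apply: leq_trans (ltn_ord j) ba.
Qed.

Lemma hlki_monic l k i : (i <= k)%N -> (k <= l)%N -> hlki l k i \is monic.
Proof.
move=> ik kl; rewrite monicMl; apply: qfall_monic => //.
by rewrite leq_sub2r.
Qed.

Lemma mup_qfall z a b : (b <= a)%N ->
  mup z (pC (qfall a b)) = (\sum_(j < b) (z ^+ (a - j) == 1%R))%N.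
Proof.
move=> ba; rewrite /pC /qfall rmorph_prod /= mup_prod.
  apply: eq_bigr => j _; rewrite -/(pC _) pC_qbr mup_Xn1 //.
  by rewrite subn_gt0; apply: leq_trans (ltn_ord j) ba.
move=> j _; rewrite -/(pC _) pC_qbr monic_neq0 // monic_Xn_sub_1 //.
by rewrite subn_gt0; apply: leq_trans (ltn_ord j) ba.
Qed.

Lemma mup_hlki z l k i : (i <= k)%N -> (k <= l)%N ->
  mup z (pC (hlki l k i)) =
  (\sum_(j < k - i) (z ^+ (l - i - j) == 1%R) + \sum_(j < i) (z ^+ (i - j) == 1%R))%N.
Proof.
move=> ik kl; rewrite /hlki /pC rmorphM /= mupM -?/(pC _).
- by rewrite /qfact !mup_qfall // leq_sub2r.
- by rewrite pC_eq0 monic_neq0 // qfall_monic // leq_sub2r.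
- by rewrite pC_eq0 monic_neq0 // qfall_monic.
Qed.


Definition Gpol l k : {poly int} := \prod_(e < l.+1) 'Phi_e ^+ Mmin l k e.

Lemma Gpol_monic l k : Gpol l k \is monic.
Proof. by apply: monic_prod => e _; apply/monic_exp/Cyclotomic_monic. Qed.

Lemma prim_uniq (z : algC) e m : e.-primitive_root z -> m.-primitive_root z = (m == e).
Proof.
move=> pe; apply/idP/eqP => [pm|->//].
apply/eqP; rewrite eqn_dvd (prim_order_dvd pe) (prim_order_dvd pm).
by rewrite (prim_expr_order pe) (prim_expr_order pm) eqxx.
Qed.

Lemma mup_Gpol_sum z l k :
  mup z (pC (Gpol l k)) = (\sum_(e < l.+1) Mmin l k e * e.-primitive_root z)%N.
Proof.
rewrite /Gpol /pC rmorph_prod /= mup_prod; last first.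
  move=> e _; rewrite rmorphXn /= expf_neq0 // -/(pC _) pC_eq0 monic_neq0 //.
  exact: Cyclotomic_monic.
apply: eq_bigr => e _; rewrite rmorphXn /= -/(pC _) mup_exp ?mup_Phi //.
by rewrite pC_eq0 monic_neq0 // Cyclotomic_monic.
Qed.

Lemma mup_Gpol z l k e : (k <= l)%N -> e.-primitive_root z ->
  mup z (pC (Gpol l k)) = Mmin l k e.
Proof.
move=> kl pe; have e0 := prim_order_gt0 pe.
rewrite mup_Gpol_sum.
under eq_bigr => i _ do rewrite (prim_uniq _ _ _ pe).
case: (ltnP e l.+1) => el.
  rewrite (bigD1 (Ordinal el)) //= eqxx muln1 big1 ?addn0 // => i /eqP ne.
  case: eqP => [h|]; last by rewrite muln0.
  by case: ne; apply: val_inj.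
rewrite big1 ?Mmin_big // => i _.
case: eqP => [h|]; last by rewrite muln0.
by move: (ltn_ord i); rewrite h ltnNge el.
Qed.

Lemma mup_Gpol_none z l k : (forall e, ~~ e.-primitive_root z) ->
  mup z (pC (Gpol l k)) = 0%N.
Proof.
move=> np; rewrite mup_Gpol_sum big1 // => i _.
by rewrite (negbTE (np _)) muln0.
Qed.

Lemma mup_hlki_prim z l k i e : (i <= k)%N -> (k <= l)%N -> e.-primitive_root z ->
  mup z (pC (hlki l k i)) = Ecount l k e i.
Proof.
move=> ik kl pe; have e0 := prim_order_gt0 pe.
rewrite mup_hlki //.
under eq_bigr => j _ do rewrite -(prim_order_dvd pe).
under [X in (_ + X)%N]eq_bigr => j _ do rewrite -(prim_order_dvd pe).
rewrite !cnt_div // ?leq_sub2r // subnn div0n subn0 /Ecount.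
by have -> : (l - i - (k - i) = l - k)%N by lia.
Qed.

Lemma noprim_pow (z : algC) n : (forall e, ~~ e.-primitive_root z) -> (0 < n)%N ->
  (z ^+ n == 1) = false.
Proof.
move=> np n0; apply/negP => /eqP zn.
by have [m pm _] := prim_order_exists n0 zn; move: (np m); rewrite pm.
Qed.

Lemma mup_hlki_none z l k i : (i <= k)%N -> (k <= l)%N ->
  (forall e, ~~ e.-primitive_root z) -> mup z (pC (hlki l k i)) = 0%N.
Proof.
move=> ik kl np; rewrite mup_hlki // !big1 // => j _; rewrite noprim_pow //.
  by rewrite subn_gt0.
by have := ltn_ord j; lia.
Qed.

Lemma ldvd_neq0 d h : h != 0 -> ldvd d h -> d != 0.
Proof.
move=> h0 [j [s E]]; apply/negP => /eqP d0.
have : 'X^j * h != 0 by rewrite mulf_neq0 // monic_neq0 ?monicXn.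
by rewrite E d0 mul0r eqxx.
Qed.

Lemma ldvd_contents d h : h \is monic -> ldvd d h -> zcontents d \is a GRing.unit.
Proof.
move=> hm [j [s E]]; apply/unitrPr; exists (zcontents s).
by rewrite -zcontentsM -E zcontents_monic // monicMl ?monicXn.
Qed.

Lemma ldvd_mup d h (z : algC) : h != 0 -> z != 0 -> ldvd d h ->
  (mup z (pC d) <= mup z (pC h))%N.
Proof.
move=> h0 z0 [j [s E]].
have Xj0 : ('X^j : {poly int}) != 0 by rewrite monic_neq0 ?monicXn.
have Xh0 : 'X^j * h != 0 by rewrite mulf_neq0.
have d0 : d != 0 by apply: contraNneq Xh0 => d0; rewrite E d0 mul0r.
have s0 : s != 0 by apply: contraNneq Xh0 => s0; rewrite E s0 mulr0.
have := congr1 (fun p => mup z (pC p)) E => /=.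
rewrite /pC !rmorphM /= map_polyXn !mupM -?/(pC _) ?pC_eq0 //; last first.
  by rewrite monic_neq0 ?monicXn.
have -> : ('X^j : {poly algC}) = ('X - 0%:P) ^+ j by rewrite polyC0 subr0.
by rewrite mup_XsubCX eq_sym (negbTE z0) add0n => ->; apply: leq_addr.
Qed.

Lemma Glgcd l k : (k <= l)%N -> is_lgcd (Gpol l k) (hlki l k) k.
Proof.
move=> kl; split.
  move=> i ik; apply: ldvd_of.
  - exact: monic_neq0 (Gpol_monic l k).
  - exact: monic_neq0 (hlki_monic _ _ _ ik kl).
  - by rewrite zcontents_monic ?Gpol_monic // unitr1.
  move=> z z0; case: (classic (exists e, e.-primitive_root z)) => [[e pe]|np].
    rewrite (mup_Gpol _ _ _ _ kl pe) (mup_hlki_prim _ _ _ _ _ ik kl pe); exact: minE_le.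
  have np' : forall e, ~~ e.-primitive_root z.
    by move=> e; apply/negP => pe; apply: np; exists e.
  by rewrite mup_Gpol_none.
move=> d Hd.
have h0m := hlki_monic _ _ _ (leq0n k) kl.
have d0 := ldvd_neq0 _ _ (monic_neq0 h0m) (Hd 0%N (leq0n k)).
apply: ldvd_of => //.
- exact: monic_neq0 (Gpol_monic l k).
- exact: ldvd_contents _ _ h0m (Hd 0%N (leq0n k)).
move=> z z0; case: (classic (exists e, e.-primitive_root z)) => [[e pe]|np].
  rewrite (mup_Gpol _ _ _ _ kl pe); apply: minE_ge => i ik.
  rewrite -(mup_hlki_prim _ _ _ _ _ ik kl pe).
  exact: ldvd_mup _ _ _ (monic_neq0 (hlki_monic _ _ _ ik kl)) z0 (Hd i ik).
have np' : forall e, ~~ e.-primitive_root z.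
  by move=> e; apply/negP => pe; apply: np; exists e.
rewrite mup_Gpol_none //.
rewrite -(mup_hlki_none _ _ _ _ (leq0n k) kl np').
exact: ldvd_mup _ _ _ (monic_neq0 h0m) z0 (Hd 0%N (leq0n k)).
Qed.

Lemma ldvd_trans a b c : ldvd a b -> ldvd b c -> ldvd a c.
Proof.
move=> [j [s E1]] [i [t E2]]; exists (i + j)%N, (s * t).
by rewrite exprD [_ ^+ i * _]mulrC -mulrA E2 mulrA E1 -mulrA.
Qed.

Lemma ldvd_mulr a b c : ldvd a b -> ldvd (a * c) (b * c).
Proof.
by move=> [j [s E]]; exists j, s; rewrite mulrA E -!mulrA [c * s]mulrC.
Qed.

Lemma monomial_fact n (s t : {poly int}) : s * t = 'X^n ->
  exists (e : bool) (m : nat), s = (-1) ^+ e * 'X^m.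
Proof.
elim: n s t => [|n IH] s t E.
  have s0 : s != 0 by apply: contra_eq_neq E => ->; rewrite mul0r eq_sym oner_neq0.
  have t0 : t != 0 by apply: contra_eq_neq E => ->; rewrite mulr0 eq_sym oner_neq0.
  have := congr1 (fun p : {poly int} => size p) E; rewrite /= size_mul // expr0 size_poly1 => hs.
  have h1 : (0 < size s)%N by rewrite size_poly_gt0.
  have h2 : (0 < size t)%N by rewrite size_poly_gt0.
  have [ss st] : size s = 1%N /\ size t = 1%N.
    by move: hs h1 h2; move: (size s) (size t) => a b; rewrite -subn1; lia.
  move/eqP/size_poly1P: ss => [c c0 Ec]; move/eqP/size_poly1P: st => [c' c0' Ec'].
  move: E; rewrite Ec Ec' -polyCM expr0 => E0.
  have cc : c * c' = 1 by apply: (@polyC_inj int); rewrite E0.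
  have cu : c \is a intUnitRing.unitz.
    by apply: (@intUnitRing.unitzPl _ c'); rewrite mulrC.
  move: cu; rewrite qualifE => /orP[] /eqP ->.
    by exists false, 0%N; rewrite expr0 !mul1r.
  by exists true, 0%N; rewrite expr1 expr0 mulr1 polyCN.
have : (s * t).[0] = 0 by rewrite E hornerXn expr0n.
rewrite hornerM => /eqP; rewrite mulf_eq0 => /orP[] /eqP h0.
  have /factor_theorem [s1 Es] : root s 0 by rewrite /root h0.
  rewrite polyC0 subr0 in Es.
  have : s1 * t = 'X^n.
    apply: (mulIf (monic_neq0 (monicX int))).
    by rewrite -exprSr -E Es mulrAC.
  move/IH => [e [m Em]]; exists e, m.+1; by rewrite Es Em exprSr mulrA.
have /factor_theorem [t1 Et] : root t 0 by rewrite /root h0.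
rewrite polyC0 subr0 in Et.
apply: (IH s t1); apply: (mulIf (monic_neq0 (monicX int))).
by rewrite -exprSr -E Et mulrA.
Qed.

Lemma ldvd_assoc a b : a != 0 -> ldvd a b -> ldvd b a ->
  exists (e : bool) (x y : nat), 'X^x * a = (-1) ^+ e * 'X^y * b.
Proof.
move=> a0 [i [s E1]] [j [t E2]].
have : s * t = 'X^(i + j).
  apply: (mulfI a0); rewrite mulrA -E1 -mulrA -E2 mulrA -exprD mulrC.
  by [].
move/monomial_fact => [e [m Es]].
exists e, m, i.
by rewrite -mulrA E1 Es mulrCA [X in a * X]mulrA -expr2 sqrr_sign mul1r mulrC.
Qed.

Definition Ppol (l k : nat) : {poly int} :=
  \prod_(1 <= m < k.+1 | (m %| (l - k).+1)%N) 'Phi_m.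

Lemma Ppol_monic l k : Ppol l k \is monic.
Proof. by apply: monic_prod => m _; apply: Cyclotomic_monic. Qed.

Lemma mup_Ppol_sum z l k :
  mup z (pC (Ppol l k)) = (\sum_(1 <= m < k.+1 | (m %| (l - k).+1)%N) m.-primitive_root z)%N.
Proof.
rewrite /Ppol /pC rmorph_prod /= mup_prod; last first.
  by move=> m _; rewrite -/(pC _) pC_eq0 monic_neq0 // Cyclotomic_monic.
by apply: eq_bigr => m _; rewrite -/(pC _) mup_Phi.
Qed.

Lemma mup_Ppol z l k e : e.-primitive_root z ->
  mup z (pC (Ppol l k)) = ((1 <= e < k.+1) && (e %| (l - k).+1))%N.
Proof.
move=> pe; rewrite mup_Ppol_sum.
under eq_bigr => m _ do rewrite (prim_uniq _ _ _ pe) -[nat_of_bool _]/(if m == e then 1 else 0)%N.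
by rewrite -big_mkcondr big_nat1_cond_eq; case: ifP.
Qed.

Lemma mup_Ppol_none z l k : (forall e, ~~ e.-primitive_root z) ->
  mup z (pC (Ppol l k)) = 0%N.
Proof. by move=> np; rewrite mup_Ppol_sum big1 // => m _; rewrite (negbTE (np _)). Qed.

Lemma GP_mup z l k : (1 <= k)%N -> (k <= l)%N ->
  mup z (pC (Gpol l k)) = mup z (pC (Gpol l k.-1 * Ppol l k)).
Proof.
move=> k1 kl.
rewrite /pC rmorphM /= mupM -?/(pC _) ?pC_eq0 ?monic_neq0 ?Gpol_monic ?Ppol_monic //.
case: k k1 kl => // k _ kl /=.
case: (classic (exists e, e.-primitive_root z)) => [[e pe]|np].
  have e0 := prim_order_gt0 pe.
  rewrite (mup_Gpol _ _ _ _ kl pe) (mup_Gpol _ _ _ _ (ltnW kl) pe) (mup_Ppol _ _ _ _ pe).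
  rewrite Mmin_step // e0 /= ltnS.
  by have -> : ((l - k.+1).+1 = l - k)%N by lia.
have np' : forall e, ~~ e.-primitive_root z.
  by move=> e; apply/negP => pe; apply: np; exists e.
by rewrite !mup_Gpol_none // mup_Ppol_none.
Qed.

Theorem mainTheorem5 (l k : nat) (g1 g2 : {poly int}) :
  (1 <= k)%N -> (k <= l)%N ->
  is_lgcd g1 (hlki l k) k ->
  is_lgcd g2 (hlki l k.-1) k.-1 ->
  exists (e : bool) (a b : nat),
    'X^a * g1 =
    (-1) ^+ e * 'X^b * g2 *
      \prod_(1 <= m < k.+1 | (m %| (l - k).+1)%N) 'Phi_m.
Proof.
move=> k1 kl [g1d g1g] [g2d g2g].
have kl' : (k.-1 <= l)%N by apply: leq_trans (leq_pred k) kl.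
have [G1d G1g] := Glgcd _ _ kl.
have [G2d G2g] := Glgcd _ _ kl'.
have a1 : ldvd g1 (Gpol l k) := G1g g1 g1d.
have a2 : ldvd (Gpol l k) g1 := g1g _ G1d.
have b1 : ldvd g2 (Gpol l k.-1) := G2g g2 g2d.
have b2 : ldvd (Gpol l k.-1) g2 := g2g _ G2d.
have GP0 : Gpol l k.-1 * Ppol l k != 0.
  by rewrite monic_neq0 // monicMl ?Gpol_monic ?Ppol_monic.
have c1 : ldvd (Gpol l k) (Gpol l k.-1 * Ppol l k).
  apply: ldvd_of => //; first exact: monic_neq0 (Gpol_monic _ _).
    by rewrite zcontents_monic ?Gpol_monic // unitr1.
  by move=> z _; rewrite GP_mup.
have c2 : ldvd (Gpol l k.-1 * Ppol l k) (Gpol l k).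
  apply: ldvd_of => //; first exact: monic_neq0 (Gpol_monic _ _).
    by rewrite zcontents_monic ?unitr1 // monicMl ?Gpol_monic ?Ppol_monic.
  by move=> z _; rewrite GP_mup.
have g10 : g1 != 0.
  apply: (ldvd_neq0 _ _ _ (g1d 0%N (leq0n k))).
  exact: monic_neq0 (hlki_monic _ _ _ (leq0n k) kl).
have d1 : ldvd g1 (g2 * Ppol l k).
  exact: (ldvd_trans _ _ _ a1 (ldvd_trans _ _ _ c1 (ldvd_mulr _ _ _ b2))).
have d2 : ldvd (g2 * Ppol l k) g1.
  exact: (ldvd_trans _ _ _ (ldvd_trans _ _ _ (ldvd_mulr _ _ _ b1) c2) a2).
have [e [x [y E]]] := ldvd_assoc _ _ g10 d1 d2.
by exists e, x, y; rewrite E mulrA.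
Qed.
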